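(* Let $p$ be a prime and let $A$ and $B$ be nontrivial finite $p$-groups. Define $A_0=A$ and $A_n=A_{n-1}\wr\mathbb{Z}/p\mathbb{Z}$ for $n\ge1$. Then $\psi(A_n,B)\to 0$ as $n\to\infty$.
   Context: For a finite group $G$, the average order is $a(G)=\frac{1}{|G|}\sum_{g\in G}\mathrm{order}(g)$ and $m(G)$ denotes the maximum order of an element of $G$. For $p$-groups $A,B$, $\psi(A,B)=\frac{a(A\wr B)}{m(A)\,a(B)}$. For groups $A,B$, let $K=\prod_{b\in B}A$, on which $B$ acts by $x\cdot(\alpha_b)_b=(\alpha_{x^{-1}b})_b$ for $x\in B$; the wreath product $A\wr B$ is the semidirect product $K\rtimes B$ for this action. *)

(* Defs.v *)
From HB Require Import structures.
From mathcomp Require Import all_boot all_order all_algebra all_fingroup.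

Set Implicit Arguments.
Unset Strict Implicit.
Unset Printing Implicit Defensive.

Import GRing.Theory Num.Theory.
Local Open Scope group_scope.

(* K = {ffun B -> A} (the product of copies of A indexed by B), on which B
   acts by (x . f)(b) = f (x^-1 * b); A wr B = K x| B with
   (f, x) * (g, y) = (f * (x . g), x * y). *)

Section Wreath.
Variables (A B : finGroupType).

Definition wreath : Type := ({ffun B -> A} * B)%type.
HB.instance Definition _ := Finite.on wreath.

Definition wr_act (x : B) (g : {ffun B -> A}) : {ffun B -> A} :=
  [ffun b => g (x^-1 * b)].

Definition wr_mul (u v : wreath) : wreath :=
  ([ffun b => u.1 b * wr_act u.2 v.1 b], u.2 * v.2).
Definition wr_one : wreath := ([ffun _ => 1], 1).
Definition wr_inv (u : wreath) : wreath :=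
  ([ffun b => (u.1 (u.2 * b))^-1], u.2^-1).

Lemma wr_mulA : associative wr_mul.
Proof.
move=> [f x] [g y] [h z]; rewrite /wr_mul /wr_act /=; congr (_, _).
  apply/ffunP => b; rewrite !ffunE invMg (@mulgA A) (@mulgA B) //.
exact: (@mulgA B).
Qed.

Lemma wr_mul1 : left_id wr_one wr_mul.
Proof.
move=> [f x]; rewrite /wr_mul /wr_act /=; congr (_, _); last by rewrite mul1g.
by apply/ffunP => b; rewrite !ffunE invg1 !mul1g.
Qed.

Lemma wr_mulV : left_inverse wr_one wr_inv wr_mul.
Proof.
move=> [f x]; rewrite /wr_mul /wr_act /=; congr (_, _); last by rewrite mulVg.
by apply/ffunP => b; rewrite !ffunE invgK mulVg.
Qed.

HB.instance Definition _ := Finite_isGroup.Build wreath wr_mulA wr_mul1 wr_mulV.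

End Wreath.

Fixpoint iter_wreath (p : nat) (A : finGroupType) (n : nat) : finGroupType :=
  match n with
  | 0 => A
  | n'.+1 => wreath (iter_wreath p A n') 'Z_p
  end.

Local Open Scope ring_scope.

Definition avg_order (R : fieldType) (G : finGroupType) : R :=
  (\sum_(g : G) (#[g]%g)%:R) / (#|G|%:R).

Definition max_order (G : finGroupType) : nat := (\max_(g : G) #[g]%g)%N.

Definition psi (R : fieldType) (A B : finGroupType) : R :=
  avg_order R (wreath A B) / ((max_order A)%:R * avg_order R B).

(* Main.v *)
Require Import Defs.
From HB Require Import structures.
From mathcomp Require Import all_boot all_order all_algebra all_fingroup all_solvable.
From mathcomp Require Import all_classical all_reals all_analysis.
From mathcomp Require Import zify ring lra.

Import numFieldNormedType.Exports.

Section Part0.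
Set Implicit Arguments. Unset Strict Implicit. Unset Printing Implicit Defensive.
Local Open Scope group_scope.

Section W.
Variables (G B : finGroupType).

Definition Pw (f : {ffun B -> G}) (x : B) (k : nat) (b : B) : G :=
  \prod_(i < k) f ((x^-1) ^+ i * b).

Lemma Pw_recl f x k b : Pw f x k.+1 b = f b * Pw f x k (x^-1 * b).
Proof.
rewrite /Pw big_ord_recl /= expg0 mul1g; congr (_ * _).
by apply: eq_bigr => i _; rewrite expgSr mulgA.
Qed.

Lemma Pw_recr f x k b : Pw f x k.+1 b = Pw f x k b * f ((x^-1) ^+ k * b).
Proof. by rewrite /Pw big_ord_recr. Qed.

Lemma wpow (f : {ffun B -> G}) x k :
  ((f, x) : wreath G B) ^+ k = ([ffun b => Pw f x k b], x ^+ k).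
Proof.
elim: k => [|k IH].
  rewrite expg0; congr (_, _); apply/ffunP => b; rewrite !ffunE /Pw big_ord0 //.
rewrite expgS IH; congr (_, _); last by rewrite expgS.
by apply/ffunP => b; rewrite ffunE /= /wr_act !ffunE Pw_recl.
Qed.

Lemma order_mulC (u v : G) : #[u * v] = #[v * u].
Proof.
have -> : v * u = (u * v) ^ u by rewrite conjgE !mulgA mulVg mul1g.
by rewrite orderJ.
Qed.

Lemma Pw_conj f x b :
  #[Pw f x #[x] (x^-1 * b)] = #[Pw f x #[x] b].
Proof.
have := order_gt0 x; case Hd: #[x] => [//|e] _.
have E : (x^-1) ^+ e.+1 = 1 by rewrite -Hd -orderV expg_order.
rewrite (Pw_recl f x e b) (Pw_recr f x e (x^-1 * b)) mulgA -expgSr E mul1g.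
by rewrite order_mulC.
Qed.

Lemma Pw_one g k b : Pw g 1 k b = g b ^+ k.
Proof.
rewrite /Pw; under eq_bigr => i _ do rewrite invg1 expg1n mul1g.
by rewrite prodg_const card_ord.
Qed.

Definition tau (b : B) (a : G) (f : {ffun B -> G}) : {ffun B -> G} :=
  [ffun c => if c == b then a * f c else f c].

Lemma tau_inj b a : injective (tau b a).
Proof.
move=> f g /ffunP H; apply/ffunP => c; have := H c; rewrite !ffunE.
by case: (c == b) => // /mulgI.
Qed.

Lemma Pw_tau f x b a : Pw (tau b a f) x #[x] b = a * Pw f x #[x] b.
Proof.
have := order_gt0 x; case Hd: #[x] => [//|e] _.
rewrite !Pw_recl ffunE eqxx -mulgA; congr (_ * _); congr (_ * _).
apply: eq_bigr => i _; rewrite ffunE.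
case: eqP => // E; exfalso.
have : ((x^-1) ^+ i.+1 == 1).
  by apply/eqP; apply: (mulIg b); rewrite mul1g expgSr -mulgA.
rewrite -order_dvdn orderV Hd => /dvdn_leq => /(_ isT).
by rewrite ltnS leqNgt ltn_ord.
Qed.

Lemma sum_P (F : G -> nat) x b :
  (#|G| * \sum_(f : {ffun B -> G}) F (Pw f x #[x] b)
  = #|{ffun B -> G}| * \sum_(g : G) F g)%N.
Proof.
rewrite -sum_nat_const.
transitivity (\sum_(a : G) \sum_(f : {ffun B -> G}) F (a * Pw f x #[x] b)%g).
  apply: eq_bigr => a _; rewrite (reindex_inj (@tau_inj b a)).
  by apply: eq_bigr => f _; rewrite Pw_tau.
rewrite exchange_big -sum_nat_const; apply: eq_bigr => f _.
by rewrite [RHS](reindex_inj (mulIg (Pw f x #[x] b))).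
Qed.

Lemma pelt_dvd (p : nat) (pG : p.-group [set: G]) (Hp : prime p) (g h : G) :
  #[g] <= #[h] -> #[g] %| #[h].
Proof.
have /p_natP [i ->] : p.-nat #[g] by apply: (mem_p_elt pG); rewrite inE.
have /p_natP [j ->] : p.-nat #[h] by apply: (mem_p_elt pG); rewrite inE.
by rewrite leq_exp2l ?prime_gt1 // => /dvdn_exp2l.
Qed.

Lemma order_wr_le (p : nat) (pG : p.-group [set: G]) (Hp : prime p) f x :
  (#[((f, x) : wreath G B)] <= #[x] * \max_(b : B) #[Pw f x #[x] b])%N.
Proof.
set M := \max_(b : B) _.
have [bs EM] : exists bs, M = #[Pw f x #[x] bs].
  by eexists; rewrite /M (@bigmax_eq_arg B 1 xpredT (fun b => #[Pw f x #[x] b])).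
have HM : forall b, Pw f x #[x] b ^+ M = 1.
  move=> b; apply/eqP; rewrite -order_dvdn.
  have Hb : #[Pw f x #[x] b] <= M by rewrite /M; exact: (leq_bigmax b).
  by rewrite EM; apply: (pelt_dvd pG Hp); rewrite -EM.
have Mpos : 0 < M by rewrite EM order_gt0.
apply: dvdn_leq; first by rewrite muln_gt0 order_gt0.
rewrite order_dvdn expgM wpow expg_order wpow expg1n; apply/eqP.
congr (_, _); apply/ffunP => b; rewrite !ffunE Pw_one ffunE; exact: HM.
Qed.
End W.

End Part0.

Section Part1.
Set Implicit Arguments. Unset Strict Implicit. Unset Printing Implicit Defensive.
Local Open Scope group_scope.

Definition Sord (G : finGroupType) : nat := (\sum_(g : G) #[g])%N.
Definition Tord (G : finGroupType) : nat := (\sum_(g : G) #[g] ^ 2)%N.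

Lemma sum_wreath (G B : finGroupType) (F : wreath G B -> nat) :
  (\sum_(w : wreath G B) F w = \sum_(x : B) \sum_(f : {ffun B -> G}) F (f, x))%N.
Proof.
rewrite exchange_big pair_big /=.
by apply: eq_bigr => -[f x].
Qed.

Lemma card_wreath (G B : finGroupType) :
  #|{: wreath G B}| = (#|{ffun B -> G}| * #|B|)%N.
Proof. exact: card_prod. Qed.

Lemma max_le_sum (I : finType) (F : I -> nat) : (\max_i F i <= \sum_i F i)%N.
Proof.
apply/bigmax_leqP => i _.
by rewrite (bigD1 i) //= leq_addr.
Qed.

Lemma max_sq_le_sum (I : finType) (i0 : I) (F : I -> nat) :
  ((\max_i F i) ^ 2 <= \sum_i F i ^ 2)%N.
Proof.
rewrite (@bigmax_eq_arg I i0 xpredT F isT).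
by rewrite (bigD1 [arg max_(i > i0) F i]) //= leq_addr.
Qed.

Lemma bound_psi (p : nat) (G B : finGroupType) (pG : p.-group [set: G]) (Hp : prime p) :
  (#|G| * Sord (wreath G B) <= #|B| * #|{ffun B -> G}| * Sord B * Sord G)%N.
Proof.
have step : forall x : B, (#|G| * \sum_(f : {ffun B -> G}) #[((f, x) : wreath G B)]
   <= #[x] * (#|B| * (#|{ffun B -> G}| * Sord G)))%N.
  move=> x.
  apply: (@leq_trans (#|G| * \sum_(f : {ffun B -> G}) (#[x] * \sum_(b : B) #[Pw f x #[x] b]))%N).
    rewrite leq_mul2l; apply/orP; right; apply: leq_sum => f _.
    apply: leq_trans (order_wr_le pG Hp f x) _.
    by rewrite leq_mul2l max_le_sum orbT.
  rewrite -big_distrr /= mulnCA leq_mul2l; apply/orP; right.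
  rewrite exchange_big big_distrr /=.
  under eq_bigr => b _ do rewrite (sum_P (fun g => #[g])).
  by rewrite sum_nat_const /Sord.
rewrite /Sord sum_wreath big_distrr /=.
apply: (@leq_trans (\sum_(x : B) #[x] * (#|B| * (#|{ffun B -> G}| * Sord G)))%N).
  by apply: leq_sum => x _; apply: step.
by rewrite -big_distrl /= mulnC !mulnA /Sord -!mulnA [X in _ <= _ * (_ * X)]mulnC.
Qed.

Section Zp.
Variables (p : nat) (Hp : prime p).

Lemma card_Zp' : #|'Z_p| = p.
Proof. by rewrite card_ord Zp_cast // prime_gt1. Qed.

Lemma Zp_order (x : 'Z_p) : x != 1 -> #[x] = p.
Proof.
move=> nx1.
have : #[x] %| p.
  have := order_dvdG (finset.in_setT x); rewrite cardsT card_Zp'; exact.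
case/primeP: Hp => _ /[apply] /orP [/eqP E|/eqP //].
by move: nx1; rewrite -order_eq1 E.
Qed.

Lemma Zp_gen (x : 'Z_p) : x != 1 -> forall b : 'Z_p, exists i, b = (x^-1) ^+ i.
Proof.
move=> nx1 b; apply/cycleP.
have -> : <[x^-1]> = [set: 'Z_p].
  apply/eqP; rewrite eqEcard finset.subsetT cardsT -orderE orderV Zp_order //.
  by rewrite /= card_ord Zp_cast ?prime_gt1.
by rewrite inE.
Qed.

Lemma all_same (G : finGroupType) (x : 'Z_p) (f : {ffun 'Z_p -> G}) b :
  x != 1 -> #[Pw f x #[x] b] = #[Pw f x #[x] 1%g].
Proof.
move=> nx1; have [i ->] := Zp_gen nx1 b.
elim: i => [|i IH]; first by rewrite expg0.
by rewrite expgS Pw_conj.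
Qed.

Lemma bound_T (G : finGroupType) (pG : p.-group [set: G]) :
  (#|G| * Tord (wreath G 'Z_p) <= (p + p.-1 * p ^ 2) * #|{ffun 'Z_p -> G}| * Tord G)%N.
Proof.
set K := #|{ffun 'Z_p -> G}|.
rewrite /Tord sum_wreath big_distrr /= (bigD1 1) //=.
have H1 : (#|G| * \sum_(f : {ffun 'Z_p -> G}) #[((f, 1%g) : wreath G 'Z_p)] ^ 2
            <= p * K * \sum_(g : G) #[g] ^ 2)%N.
  apply: (@leq_trans (#|G| * \sum_(f : {ffun 'Z_p -> G})
             \sum_(b : 'Z_p) #[Pw f 1%g #[1%g : 'Z_p] b] ^ 2)%N).
    rewrite leq_mul2l; apply/orP; right; apply: leq_sum => f _.
    apply: leq_trans (max_sq_le_sum 1 _).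
    rewrite leq_exp2r //.
    by apply: leq_trans (order_wr_le pG Hp f 1) _; rewrite order1 mul1n.
  rewrite exchange_big big_distrr /=.
  under eq_bigr => b _ do rewrite (sum_P (fun g : G => (#[g] ^ 2)%N)).
  by rewrite sum_nat_const card_Zp' mulnA.
have H2 : forall x : 'Z_p, x != 1 ->
   (#|G| * \sum_(f : {ffun 'Z_p -> G}) #[((f, x) : wreath G 'Z_p)] ^ 2
            <= p ^ 2 * K * \sum_(g : G) #[g] ^ 2)%N.
  move=> x nx1.
  apply: (@leq_trans (#|G| * \sum_(f : {ffun 'Z_p -> G})
             p ^ 2 * #[Pw f x #[x] 1%g] ^ 2)%N).
    rewrite leq_mul2l; apply/orP; right; apply: leq_sum => f _.
    rewrite -expnMn leq_exp2r //.
    apply: leq_trans (order_wr_le pG Hp f x) _.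
    have -> : (\max_b #[Pw f x #[x] b] = #[Pw f x #[x] 1%g])%N.
      apply/eqP; rewrite eqn_leq (leq_bigmax (1%g : 'Z_p)) andbT.
      by apply/bigmax_leqP => b _; rewrite (all_same _ _ nx1).
    by rewrite Zp_order.
  rewrite -big_distrr /= mulnCA (sum_P (fun g : G => (#[g] ^ 2)%N)).
  by rewrite mulnA.
apply: (@leq_trans (p * K * \sum_(g : G) #[g] ^ 2 +
   \sum_(x : 'Z_p | x != 1%g) p ^ 2 * K * \sum_(g : G) #[g] ^ 2)%N).
  by rewrite leq_add // leq_sum.
rewrite sum_nat_const cardC1 card_Zp'.
by rewrite -/K !mulnDl !mulnA.
Qed.

Lemma idx_neq (B : finGroupType) (x : B) e (i : 'I_e) b :
  #[x] = e.+1 -> (x^-1) ^+ i * (x^-1 * b) != b.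
Proof.
move=> Hd; apply/eqP => E.
have : ((x^-1) ^+ i.+1 == 1).
  by apply/eqP; apply: (mulIg b); rewrite mul1g expgSr -mulgA.
rewrite -order_dvdn orderV Hd => /dvdn_leq => /(_ isT).
by rewrite ltnS leqNgt ltn_ord.
Qed.

Lemma max_wr (G : finGroupType) :
  (p * max_order G <= max_order (wreath G 'Z_p))%N.
Proof.
have [g Eg] : exists g : G, max_order G = #[g].
  by eexists; rewrite /max_order (@bigmax_eq_arg G 1%g xpredT (fun g => #[g])).
set x0 : 'Z_p := Zp1.
have Hx0 : #[x0] = p by rewrite /x0 order_Zp1 Zp_cast // prime_gt1.
pose f0 : {ffun 'Z_p -> G} := [ffun b => if b == 1%g then g else 1%g].
pose w : wreath G 'Z_p := (f0, x0).
rewrite Eg; apply: (@leq_trans #[w]); last first.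
  by rewrite /max_order; exact: (leq_bigmax w).
have Hw := expg_order w.
rewrite {2}/w wpow in Hw.
case: Hw => _ Hxn.
have : #[x0] %| #[w] by rewrite order_dvdn Hxn.
rewrite Hx0.
case/dvdnP => k Hk.
have kpos : 0 < k.
  by have := order_gt0 w; rewrite Hk muln_gt0 => /andP[].
have HP : Pw f0 x0 #[x0] 1%g = g.
  have := order_gt0 x0; case Hd: #[x0] => [//|e] _.
  rewrite Pw_recl ffunE eqxx /Pw big1 ?mulg1 // => i _.
  by rewrite ffunE; have := idx_neq i 1%g Hd; rewrite mulg1 => /negbTE ->.
have : w ^+ (p * k) = 1 by rewrite mulnC -Hk expg_order.
have Ex : x0 ^+ p = 1 by rewrite -[in X in _ ^+ X]Hx0 expg_order.
rewrite expgM {1}/w wpow Ex wpow expg1n.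
case=> /ffunP /(_ 1%g); rewrite !ffunE Pw_one ffunE -[in X in Pw _ _ X]Hx0 HP => /eqP.
rewrite -order_dvdn => /dvdn_leq => /(_ kpos) Hgk.
by rewrite Hk [(k * p)%N]mulnC leq_mul2l Hgk orbT.
Qed.

Lemma pgroup_wr (G : finGroupType) (pG : p.-group [set: G]) :
  p.-group [set: wreath G 'Z_p].
Proof.
rewrite /pgroup cardsT card_prod card_ffun pnatM pnatX.
rewrite /pgroup cardsT in pG.
by rewrite pG card_Zp' pnat_id.
Qed.
End Zp.

End Part1.

Section Part2.
Set Implicit Arguments. Unset Strict Implicit. Unset Printing Implicit Defensive.

Lemma cs_nat (I : finType) (a : I -> nat) :
  (\sum_i a i) ^ 2 <= #|I| * \sum_i a i ^ 2.
Proof.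
have E : (\sum_i a i) ^ 2 = \sum_i \sum_j a i * a j.
  rewrite expnS expn1 big_distrl /=; apply: eq_bigr => i _.
  by rewrite big_distrr.
have H : 2 * (\sum_i a i) ^ 2 <= 2 * (#|I| * \sum_i a i ^ 2).
  rewrite E big_distrr /=.
  apply: (@leq_trans (\sum_i \sum_j (a i ^ 2 + a j ^ 2))).
    apply: leq_sum => i _; rewrite big_distrr /=; apply: leq_sum => j _.
    exact: nat_Cauchy.
  rewrite (eq_bigr (fun i => #|I| * a i ^ 2 + \sum_j a j ^ 2)); last first.
    by move=> i _; rewrite big_split /= sum_nat_const.
  rewrite big_split /= -big_distrr /= sum_nat_const mul2n -addnn; exact: leqnn.
by rewrite leq_mul2l /= in H.
Qed.

Lemma max_order_gt0 (G : finGroupType) : 0 < max_order G.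
Proof.
apply: (@leq_trans #[1 : G]%g); first exact: order_gt0.
exact: (leq_bigmax (1%g : G)).
Qed.

Lemma T_le (G : finGroupType) : Tord G <= #|G| * max_order G ^ 2.
Proof.
rewrite /Tord -sum_nat_const; apply: leq_sum => g _.
by rewrite leq_exp2r //; apply: (leq_bigmax g).
Qed.

Lemma S_le (G : finGroupType) : Sord G <= #|G| * max_order G.
Proof.
rewrite /Sord -sum_nat_const; apply: leq_sum => g _.
by apply: (leq_bigmax g).
Qed.

Lemma pgroup_iter p (A : finGroupType) (Hp : prime p) (pA : (p.-group [set: A])%g) n :
  (p.-group [set: iter_wreath p A n])%g.
Proof. by elim: n => [//|n IH] /=; apply: pgroup_wr. Qed.

Lemma wr_invariant p (A : finGroupType) (Hp : prime p) (pA : (p.-group [set: A])%g) n :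
  Tord (iter_wreath p A n) * (p ^ 3) ^ n <=
  (p + p.-1 * p ^ 2) ^ n * #|iter_wreath p A n| * max_order (iter_wreath p A n) ^ 2.
Proof.
elim: n => [|n IH]; first by rewrite !expn0 muln1 mul1n T_le.
set G := iter_wreath p A n.
have pG : (p.-group [set: G])%g by apply: pgroup_iter.
have HT := bound_T Hp pG.
have Hm := max_wr Hp G.
have HN : #|iter_wreath p A n.+1| = #|{ffun 'Z_p -> G}| * p.
  by rewrite /= card_prod card_Zp'.
have Npos : 0 < #|G| by apply/card_gt0P; exists 1%g.
rewrite HN /=.
rewrite -/G in IH *.
move: HT Hm IH Npos.
set K := #|{ffun 'Z_p -> G}|.
set a := (p + p.-1 * p ^ 2).
set T1 := Tord (wreath G 'Z_p). set T0 := Tord G.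
set M1 := max_order (wreath G 'Z_p). set m0 := max_order G.
set N := #|G|.
rewrite [(p ^ 3) ^ n.+1]expnS [a ^ n.+1]expnS.
set P := (p ^ 3) ^ n. set An := a ^ n.
move=> HT Hm IH Npos.
have Hm2 : (p * m0) ^ 2 <= M1 ^ 2 by rewrite leq_exp2r.
rewrite -(leq_pmul2l Npos).
apply: (@leq_trans (a * K * T0 * (P * p ^ 3))).
  by rewrite mulnA [p ^ 3 * P]mulnC leq_mul2r HT orbT.
apply: (@leq_trans (a * K * (An * N * m0 ^ 2) * p ^ 3)).
  rewrite mulnA leq_mul2r; apply/orP; right.
  rewrite -mulnA leq_mul2l; apply/orP; right.
  exact: IH.
apply: (@leq_trans (N * (a * An * (K * p) * (p * m0) ^ 2))).
  apply: eq_leq; rewrite expnMn; ring.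
rewrite leq_mul2l; apply/orP; right.
by rewrite leq_mul2l Hm2 orbT.
Qed.

End Part2.

Import Order.TTheory GRing.Theory Num.Theory.
Local Open Scope ring_scope.

Lemma avg_orderE (R : fieldType) (G : finGroupType) :
  avg_order R G = (Sord G)%:R / (#|G|)%:R.
Proof. by rewrite /avg_order /Sord natr_sum. Qed.

Lemma aux_ineq (R : realFieldType) (N Sw K b Sb m Sn : nat) :
  (0 < N)%N -> (0 < K)%N -> (0 < b)%N -> (0 < Sb)%N -> (0 < m)%N ->
  (N * Sw <= b * K * Sb * Sn)%N ->
  0 <= (Sw%:R / (K * b)%:R / (m%:R * (Sb%:R / b%:R)) : R)
  <= b%:R * (Sn%:R / (N%:R * m%:R)).
Proof.
move=> HN HK Hb HSb Hm H.
have rN : 0 < N%:R :> R by rewrite ltr0n.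
have rK : 0 < K%:R :> R by rewrite ltr0n.
have rb : 0 < b%:R :> R by rewrite ltr0n.
have rSb : 0 < Sb%:R :> R by rewrite ltr0n.
have rm : 0 < m%:R :> R by rewrite ltr0n.
have H' : N%:R * Sw%:R <= b%:R * K%:R * Sb%:R * Sn%:R :> R.
  by rewrite -!natrM ler_nat.
have E1 : Sw%:R / (K * b)%:R / (m%:R * (Sb%:R / b%:R)) =
   (N%:R * Sw%:R) / (N%:R * K%:R * m%:R * Sb%:R) :> R.
  rewrite natrM; field.
  by rewrite !lt0r_neq0.
have E2 : b%:R * (Sn%:R / (N%:R * m%:R)) =
   (b%:R * K%:R * Sb%:R * Sn%:R) / (N%:R * K%:R * m%:R * Sb%:R) :> R.
  field.
  by rewrite !lt0r_neq0.
rewrite E1 E2; apply/andP; split.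
  by rewrite divr_ge0 // ?mulr_ge0 // ler0n.
rewrite ler_pM2r // invr_gt0 !mulr_gt0 //.
Qed.

Lemma psi_le (R : realFieldType) (p : nat) (G B : finGroupType)
  (pG : (p.-group [set: G])%g) (Hp : prime p) :
  0 <= psi R G B <= #|B|%:R * ((Sord G)%:R / (#|G|%:R * (max_order G)%:R)).
Proof.
rewrite /psi !avg_orderE.
rewrite card_prod.
apply: aux_ineq.
- by apply/card_gt0P; exists 1%g.
- by apply/card_gt0P; exists [ffun=> 1%g].
- by apply/card_gt0P; exists 1%g.
- apply: (@leq_trans #[1 : B]%g); first exact: order_gt0.
  by rewrite /Sord (bigD1 1%g) //= leq_addr.
- exact: max_order_gt0.
- by have := bound_psi B pG Hp.
Qed.

Definition rr (R : realFieldType) (G : finGroupType) : R :=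
  (Sord G)%:R / (#|G|%:R * (max_order G)%:R).

Lemma rr_ge0 (R : realFieldType) G : 0 <= rr R G.
Proof. by rewrite /rr divr_ge0 ?mulr_ge0 ?ler0n. Qed.

Lemma rr_sq (R : realFieldType) (G : finGroupType) :
  rr R G ^+ 2 <= (Tord G)%:R / (#|G|%:R * (max_order G)%:R ^+ 2).
Proof.
have rN : 0 < #|G|%:R :> R by rewrite ltr0n; apply/card_gt0P; exists 1%g.
have rm : 0 < (max_order G)%:R :> R by rewrite ltr0n max_order_gt0.
have H : ((Sord G)%:R ^+ 2 <= #|G|%:R * (Tord G)%:R :> R).
  by rewrite -natrX -natrM ler_nat cs_nat.
have -> : rr R G ^+ 2 = (Sord G)%:R ^+ 2 / (#|G|%:R * (#|G|%:R * (max_order G)%:R ^+ 2)).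
  by rewrite /rr; field; rewrite !lt0r_neq0.
have -> : (Tord G)%:R / (#|G|%:R * (max_order G)%:R ^+ 2) =
   (#|G|%:R * (Tord G)%:R) / (#|G|%:R * (#|G|%:R * (max_order G)%:R ^+ 2)) :> R.
  by field; rewrite !lt0r_neq0.
by rewrite ler_pM2r // invr_gt0 !mulr_gt0 // exprn_gt0.
Qed.

Lemma Q_le (R : realFieldType) p (A : finGroupType) (Hp : prime p)
   (pA : (p.-group [set: A])%g) n :
  (Tord (iter_wreath p A n))%:R /
     (#|iter_wreath p A n|%:R * (max_order (iter_wreath p A n))%:R ^+ 2)
  <= ((p + p.-1 * p ^ 2)%N%:R / (p ^ 3)%N%:R) ^+ n :> R.
Proof.
set G := iter_wreath p A n.
have rN : 0 < #|G|%:R :> R by rewrite ltr0n; apply/card_gt0P; exists 1%g.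
have rm : 0 < (max_order G)%:R :> R by rewrite ltr0n max_order_gt0.
have rp : 0 < (p ^ 3)%N%:R :> R by rewrite ltr0n expn_gt0 prime_gt0.
have H := @wr_invariant p A Hp pA n.
have H' : (Tord G)%:R * ((p ^ 3)%N%:R) ^+ n <=
   ((p + p.-1 * p ^ 2)%N%:R) ^+ n * #|G|%:R * (max_order G)%:R ^+ 2 :> R.
  by rewrite -!natrX -!natrM ler_nat.
rewrite expr_div_n ler_pdivrMr ?mulr_gt0 ?exprn_gt0 //.
rewrite mulrAC ler_pdivlMr ?exprn_gt0 //.
by rewrite mulrA.
Qed.


Theorem corollary5p2 (R : realType) (p : nat) (A B : finGroupType) :
  prime p ->
  (p.-group [set: A])%g -> [set: A] != 1%g ->
  (p.-group [set: B])%g -> [set: B] != 1%g ->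
  ((fun n : nat => psi R (iter_wreath p A n) B) @ \oo --> (0 : R))%classic.
Proof.
move=> Hp pA _ _ _.
set a := (p + p.-1 * p ^ 2)%N.
set c : R := a%:R / (p ^ 3)%N%:R.
set s : R := Num.sqrt c.
have rp : 0 < (p ^ 3)%N%:R :> R by rewrite ltr0n expn_gt0 prime_gt0.
have c0 : 0 <= c by rewrite divr_ge0 ?ler0n.
have ap : (a < p ^ 3)%N.
  have := prime_gt1 Hp; rewrite /a => H.
  nia.
have c1 : c < 1 by rewrite ltr_pdivrMr // mul1r ltr_nat.
have s0 : 0 <= s by apply: sqrtr_ge0.
have s1 : `|s| < 1 by rewrite ger0_norm // -sqrtr1 ltr_sqrt.
have bound : forall n, 0 <= psi R (iter_wreath p A n) B <= #|B|%:R * s ^+ n.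
  move=> n.
  have pG := pgroup_iter Hp pA n.
  have /andP [H0 H1] := psi_le R B pG Hp.
  rewrite H0 /=; apply: (le_trans H1).
  rewrite ler_wpM2l ?ler0n //.
  have Hr := rr_sq R (iter_wreath p A n).
  have HQ := Q_le R Hp pA n.
  rewrite -/(rr R _) -(@ler_pXn2r _ 2) // ?nnegrE ?rr_ge0 ?exprn_ge0 //.
  rewrite -exprM mulnC exprM sqr_sqrtr //.
  exact: (le_trans Hr HQ).
apply: (@squeeze_cvgr _ _ _ _ (fun _ => 0) (fun n => #|B|%:R * s ^+ n)).
- by near=> n; exact: bound.
- exact: cvg_cst.
- rewrite -(mulr0 (#|B|%:R : R)); apply: cvgMl_tmp; exact: cvg_expr.
Unshelve. all: end_near.
Qed.
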